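(* If $(\Phi,D)$ is a domain-free s-continuous information algebra, then its associated labeled information algebra $(\Psi,D)$ is a labeled s-continuous information algebra, i.e., there is a family $\{\Gamma_x\}_{x\in D}$ making $(\Psi,\{\Gamma_x\}_{x\in D},D)$ a labeled s-continuous information algebra.
   Context: A domain-free information algebra $(\Phi,D)$ consists of a set $\Phi$, a lattice $D$, a combination $\otimes$ and a focusing $(\psi,x)\mapsto\psi^{\Rightarrow x}$ ($x\in D$) such that: $\otimes$ is associative, commutative with neutral element $e$; $(\psi^{\Rightarrow y})^{\Rightarrow x}=\psi^{\Rightarrow x\wedge y}$; $(\phi^{\Rightarrow x}\otimes\psi)^{\Rightarrow x}=\phi^{\Rightarrow x}\otimes\psi^{\Rightarrow x}$; every $\psi$ has some $x$ with $\psi^{\Rightarrow x}=\psi$; $\psi\otimes\psi^{\Rightarrow x}=\psi$. In both domain-free and labeled algebras, $\psi\le\phi$ iff $\psi\otimes\phi=\phi$; suprema refer to this order. $a\ll b$ means: for every directed $X$ with $b\le\vee X$ there is $c\in X$ with $a\le c$. A domain-free $(\Phi,D)$ with $D$ having a top element is s-continuous if there exists $\Gamma\subseteq\Phi$, closed under combination and containing $e$, such that every directed subset of $\Gamma$ has a supremum in $\Phi$ and $\phi^{\Rightarrow x}=\vee\{\psi\in\Gamma:\psi=\psi^{\Rightarrow x}\ll\phi\}$ for all $\phi\in\Phi$, $x\in D$. The associated labeled information algebra is $(\Psi,D)$ with $\Psi=\{(\phi,x)\in\Phi\times D:\phi=\phi^{\Rightarrow x}\}$, labeling $d(\phi,x)=x$,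 combination $(\phi,x)\otimes(\psi,y)=(\phi\otimes\psi,x\vee y)$, marginalization $(\phi,x)^{\downarrow y}=(\phi^{\Rightarrow y},y)$ for $y\le x$; its neutral elements are $e_x=(e,x)$. For a labeled information algebra (labeling $d$, combination $\otimes$, marginalization $\downarrow$, neutral elements $e_x$ with $d(e_x)=x$), write $\Phi_x$ for the elements with label $x$ and $\ll_x$ for the way-below relation of the poset $(\Phi_x,\le)$. A labeled s-continuous information algebra is a triple $(\Phi,\{\Gamma_x\}_{x\in D},D)$ with $D$ having a top element $\top$ and, for each $x\in D$, $\Gamma_x\subseteq\Phi_x$ closed under combination, containing $e_x$, such that: (convergency) every directed $X\subseteq\Gamma_x$ has a supremum $\vee X$ and $\vee X\in\Phi_x$; (strong density) for all $\phi\in\Phi_x$, $\phi=\vee\{\psi^{\downarrow x}\in\Gamma_x:\ \psi\in\Phi,\ x\le d(\psi),\ \psi^{\downarrow x}\otimes e_\top\in\Gamma_\top,\ \psi^{\downarrow x}\ll_x\phi\}$. *)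

(* Defs.v *)
From mathcomp Require Import all_boot all_order.
Set Implicit Arguments.
Unset Strict Implicit.
Unset Printing Implicit Defensive.
Import Order.Theory.
Local Open Scope order_scope.

Section OrderNotions.
Variables (T : Type) (le : T -> T -> Prop).

Definition is_ub (X : T -> Prop) (s : T) : Prop := forall a, X a -> le a s.

Definition is_sup (C : T -> Prop) (X : T -> Prop) (s : T) : Prop :=
  C s /\ is_ub X s /\ (forall u, C u -> is_ub X u -> le s u).

Definition directed (X : T -> Prop) : Prop :=
  (exists a, X a) /\
  (forall a b, X a -> X b -> exists c, X c /\ le a c /\ le b c).

Definition way_below (C : T -> Prop) (a b : T) : Prop :=
  forall X : T -> Prop, (forall z, X z -> C z) -> directed X ->
  forall s, is_sup C X s -> le b s -> exists c, X c /\ le a c.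
End OrderNotions.

Definition info_le (T : Type) (comb : T -> T -> T) (a b : T) : Prop :=
  comb a b = b.

Definition allT (T : Type) : T -> Prop := fun _ => True.

Definition domain_free_IA (disp : Order.disp_t) (D : latticeType disp)
    (Phi : Type) (comb : Phi -> Phi -> Phi) (e : Phi)
    (focus : Phi -> D -> Phi) : Prop :=
  associative comb /\ commutative comb /\ left_id e comb /\
  (forall psi (x y : D), focus (focus psi y) x = focus psi (x `&` y)) /\
  (forall phi psi (x : D),
      focus (comb (focus phi x) psi) x = comb (focus phi x) (focus psi x)) /\
  (forall psi, exists x : D, focus psi x = psi) /\
  (forall psi (x : D), comb psi (focus psi x) = psi).

Definition df_s_continuous (disp : Order.disp_t) (D : tLatticeType disp)
    (Phi : Type) (comb : Phi -> Phi -> Phi) (e : Phi)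
    (focus : Phi -> D -> Phi) : Prop :=
  let le := info_le comb in
  exists Gamma : Phi -> Prop,
    [/\ (forall a b, Gamma a -> Gamma b -> Gamma (comb a b)),
        Gamma e,
        (forall X : Phi -> Prop, (forall z, X z -> Gamma z) -> directed le X ->
           exists s, is_sup le (@allT Phi) X s) &
        (forall phi (x : D),
           is_sup le (@allT Phi)
             (fun psi => [/\ Gamma psi, psi = focus psi x &
                             way_below le (@allT Phi) psi phi])
             (focus phi x))].

(* ---------- labeled s-continuous information algebras ----------
   The labeled algebra is given by a carrier type [L] with a membership
   predicate [InPsi] (the actual set of valuations), labeling [lab],
   combination [comb], marginalization [marg] (only used for y <= d(psi))
   and neutral elements [neut]. *)
Definition labeled_s_continuous (disp : Order.disp_t) (D : tLatticeType disp)
    (L : Type) (InPsi : L -> Prop) (lab : L -> D)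
    (comb : L -> L -> L) (marg : L -> D -> L) (neut : D -> L)
    (Gamma : D -> L -> Prop) : Prop :=
  let le := info_le comb in
  let Phi_ x := fun a => InPsi a /\ lab a = x in
  [/\ (forall x a, Gamma x a -> Phi_ x a),
      (forall x a b, Gamma x a -> Gamma x b -> Gamma x (comb a b)),
      (forall x, Gamma x (neut x)),
      (forall x (X : L -> Prop), (forall z, X z -> Gamma x z) -> directed le X ->
         exists s, is_sup le InPsi X s /\ Phi_ x s) &
      (forall x phi, Phi_ x phi ->
         is_sup le InPsi
           (fun a => exists psi, InPsi psi /\ x <= lab psi /\ a = marg psi x /\
                                  Gamma x (marg psi x) /\
                                  Gamma \top (comb (marg psi x) (neut \top)) /\
                                  way_below le (Phi_ x) (marg psi x) phi)
           phi)].

Section Assoc.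
Variables (disp : Order.disp_t) (D : tLatticeType disp) (Phi : Type)
  (comb : Phi -> Phi -> Phi) (e : Phi) (focus : Phi -> D -> Phi).

Definition assoc_Psi (p : Phi * D) : Prop := p.1 = focus p.1 p.2.
Definition assoc_lab (p : Phi * D) : D := p.2.
Definition assoc_comb (p q : Phi * D) : Phi * D := (comb p.1 q.1, p.2 `|` q.2).
Definition assoc_marg (p : Phi * D) (y : D) : Phi * D := (focus p.1 y, y).
Definition assoc_neut (x : D) : Phi * D := (e, x).
End Assoc.

(* Main.v *)
Require Import Defs.
From mathcomp Require Import all_boot all_order.
Import Order.Theory.
Local Open Scope order_scope.

Section Aux.
Variables (Phi : Type) (comb : Phi -> Phi -> Phi).
Hypothesis cA : associative comb.
Hypothesis cC : commutative comb.

Lemma le_trans' a b c : info_le comb a b -> info_le comb b c -> info_le comb a c.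
Proof. rewrite /info_le => h1 h2. by rewrite -h2 cA h1. Qed.

Lemma le_anti' a b : info_le comb a b -> info_le comb b a -> a = b.
Proof. rewrite /info_le => h1 h2. by rewrite -h1 cC h2. Qed.
End Aux.

Theorem theorem4p7 (disp : Order.disp_t) (D : tLatticeType disp) (Phi : Type)
    (comb : Phi -> Phi -> Phi) (e : Phi) (focus : Phi -> D -> Phi) :
  domain_free_IA comb e focus ->
  df_s_continuous comb e focus ->
  exists Gamma : D -> Phi * D -> Prop,
    labeled_s_continuous (assoc_Psi focus) (@assoc_lab _ D Phi)
      (assoc_comb comb) (assoc_marg focus) (assoc_neut e) Gamma.
Proof.
move=> [cA [cC [c1 [fF [fC [_ fI]]]]]] [G [GC Ge Gsup Gden]].
have fle : forall a x, info_le comb (focus a x) a.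
  by move=> a x; rewrite /info_le cC fI.
have fmono : forall a b x, info_le comb a b -> info_le comb (focus a x) (focus b x).
  move=> a b x hab; rewrite /info_le.
  have h : comb (focus a x) b = b.
    exact: (@le_trans' _ comb cA _ _ _ (fle a x) hab).
  by rewrite -fC h.
have ffx : forall a x, focus (focus a x) x = focus a x.
  by move=> a x; rewrite fF meetxx.
have fe : forall x, focus e x = e.
  by move=> x; have := fI e x; rewrite c1.
have ce : forall a, comb a e = a by move=> a; rewrite cC c1.
exists (fun x a => G a.1 /\ a.1 = focus a.1 x /\ a.2 = x).
split.
- move=> x [a1 a2] /= [_ [h1 ->]]; split; [exact: h1 | by []].
- move=> x [a1 a2] [b1 b2] /= [Ga [ha ->]] [Gb [hb ->]]; split; first exact: GC.
  split; last exact: joinxx.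
  by rewrite {2}ha fC -ha -hb.
- move=> x /=; split=> //; by rewrite fe.
- move=> x X XG [[a0 Xa0] Xdir].
  pose X1 := fun h => X (h, x).
  have X1G : forall h, X1 h -> G h.
    by move=> h /XG [].
  have Xpair : forall a, X a -> a = (a.1, x).
    by move=> [a1 a2] /XG /= [_ [_ ->]].
  have X1dir : directed (info_le comb) X1.
    split; first by exists a0.1; rewrite /X1 -Xpair.
    move=> a b Xa Xb; have [c [Xc [hac hbc]]] := Xdir _ _ Xa Xb.
    exists c.1; rewrite /X1 -Xpair //; split=> //; split.
    by move: hac; rewrite (Xpair c Xc) /info_le /assoc_comb /= => -[->].
    by move: hbc; rewrite (Xpair c Xc) /info_le /assoc_comb /= => -[->].
  have [s [_ [sub sleast]]] := Gsup X1 X1G X1dir.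
  have fsub : is_ub (info_le comb) X1 (focus s x).
    move=> h X1h; have [_ [hh _]] := XG _ X1h; rewrite /= in hh.
    rewrite hh; apply: fmono; exact: sub.
  have sfs : s = focus s x.
    apply: (@le_anti' _ comb cC); last exact: fle.
    exact: sleast.
  exists (s, x); split; last by split.
  split; first exact: sfs.
  split.
    move=> [a1 a2] Xa; have := Xpair _ Xa; move=> [->].
    by rewrite /info_le /assoc_comb /= joinxx (sub a1 _) //; rewrite /X1 -(Xpair _ Xa) //.
  move=> [u1 u2] _ ub.
  have hx : x `|` u2 = u2.
    have := ub _ Xa0; rewrite (Xpair _ Xa0) /info_le /assoc_comb /=.
    by move=> [_ ->].
  rewrite /info_le /assoc_comb /= hx (_ : comb s u1 = u1) //.
  apply: sleast => //. move=> h X1h.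
  by have := ub _ X1h; rewrite /info_le /assoc_comb /= => -[->].
- move=> x [f1 f2] [hf /= hf2]; subst f2.
  set S := fun a => _.
  have [_ [Gub Gleast]] := Gden f1 x.
  have Se : forall g, [/\ G g, g = focus g x & way_below (info_le comb) (@Defs.allT Phi) g f1] ->
      S (g, x).
    move=> g [Gg hg wb]; exists (g, x); split=> //; split=> //.
    rewrite /assoc_marg /= -hg; split=> //; split; first by split=> //; rewrite ffx.
    split.
      rewrite /assoc_comb /assoc_neut /= ce joinx1; split=> //; split=> //.
      by rewrite hg fF meet_r ?lex1.
    move=> X XP Xdir s ssup hfs.
    have Xpair : forall a, X a -> a = (a.1, x).
      by move=> [a1 a2] /XP /= [_ ->].
    have [[sP slab] [sub sleast]] := ssup.
    destruct s as [s1 s2]; simpl in slab; subst s2.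
    pose X1 := fun h => X (h, x).
    have X1dir : directed (info_le comb) X1.
      have [[a0 Xa0] Xd] := Xdir.
      split; first by exists a0.1; rewrite /X1 -Xpair.
      move=> a b Xa Xb; have [c [Xc [hac hbc]]] := Xd _ _ Xa Xb.
      exists c.1; rewrite /X1 -Xpair //; split=> //; split.
      by move: hac; rewrite (Xpair c Xc) /info_le /assoc_comb /= => -[->].
      by move: hbc; rewrite (Xpair c Xc) /info_le /assoc_comb /= => -[->].
    have s1sup : is_sup (info_le comb) (@Defs.allT Phi) X1 s1.
      split=> //; split.
        move=> h X1h. by have := sub _ X1h; rewrite /info_le /assoc_comb /= => -[->].
      move=> u _ uub.
      apply: (@le_trans' _ comb cA _ _ _ _ (fle u x)).
      have H2 : info_le (assoc_comb comb) (s1, x) (focus u x, x).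
        apply: sleast.
        + split=> //=; by rewrite /assoc_Psi /= ffx.
        + move=> [a1 a2] Xa. have [ha hx] := XP _ Xa.
          rewrite /assoc_Psi /assoc_lab /= in ha hx. subst a2.
          rewrite /info_le /assoc_comb /= joinxx.
          have X1a : X1 a1 by [].
          by rewrite {1}ha (fmono _ _ _ (uub _ X1a)).
      by move: H2; rewrite /info_le /assoc_comb /= => -[->].
    have hfs1 : info_le comb f1 s1.
      by move: hfs; rewrite /info_le /assoc_comb /= => -[->].
    have [c [X1c hgc]] := wb X1 (fun _ _ => I) X1dir s1 s1sup hfs1.
    exists (c, x); split=> //.
    by rewrite /info_le /assoc_comb /= hgc joinxx.
  have hf' : f1 = focus f1 x by exact: hf.
  have refl : info_le (assoc_comb comb) (f1, x) (f1, x).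
    rewrite /info_le /assoc_comb /= joinxx.
    by rewrite {2}hf' fI.
  have wble : forall a, S a -> info_le (assoc_comb comb) a (f1, x).
    move=> a [psi [_ [_ [-> [_ [_ wb]]]]]].
    have subX : forall z, z = (f1, x) -> assoc_Psi focus z /\ assoc_lab z = x.
      by move=> z ->; split; [exact: hf | by []].
    have dirX : directed (info_le (assoc_comb comb)) (fun z => z = (f1, x)).
      split; first by exists (f1, x).
      move=> a' b' -> ->; exists (f1, x); by split.
    have supX : is_sup (info_le (assoc_comb comb))
        (fun a => assoc_Psi focus a /\ assoc_lab a = x) (fun z => z = (f1, x)) (f1, x).
      split; first by split; [exact: hf | by []].
      split; first by move=> z ->.
      move=> u _ ub; exact: ub.
    have [c [ec hc]] := wb (fun z => z = (f1, x)) subX dirX (f1, x) supX refl.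
    by rewrite -ec.
  have Seen : S (e, x).
    apply: Se; split; [exact: Ge | by rewrite fe | ].
    move=> X _ [[a Xa] _] s0 _ _; exists a; split=> //; exact: c1.
  split; first exact: hf.
  split; first exact: wble.
  move=> [u1 u2] _ ub.
  have hx : x `|` u2 = u2.
    by have := ub _ Seen; rewrite /info_le /assoc_comb /= => -[_ ->].
  rewrite /info_le /assoc_comb /= hx {1}hf'.
  have := Gleast u1 I.
  rewrite /info_le => -> //.
  move=> g Gg; have := ub _ (Se g Gg).
  by rewrite /info_le /assoc_comb /= => -[->].
Qed.
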